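(* For every integer $L\geq 0$, \[ \sum_{j=-\infty}^{\infty} q^{\binom{j-1}{2}} \left(\frac{j}{3}\right) {2L+1 \brack L+j}_q = q^L\,\frac{(-1;q^3)_L}{(-1;q)_L}\,\bigl(1+q-q^{L+1}\bigr), \] where $\binom{j-1}{2}=\frac{(j-1)(j-2)}{2}$.
   Context: For a variable $a$ and integer $n\ge 0$, $(a;q)_n=(1-a)(1-aq)\cdots(1-aq^{n-1})$ (with $(a;q)_0=1$). The $q$-binomial coefficient is ${A \brack B}_q=\frac{(q;q)_A}{(q;q)_B(q;q)_{A-B}}$ if $0\le B\le A$ are integers, and $0$ otherwise. $\left(\frac{j}{3}\right)$ is the Legendre symbol modulo 3: it equals $1$ if $j\equiv 1 \pmod 3$, $-1$ if $j\equiv -1\pmod 3$, and $0$ if $3\mid j$. *)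

(* Defs.v *)
From HB Require Import structures.
From mathcomp Require Import all_boot all_order all_algebra.
Set Implicit Arguments.
Unset Strict Implicit.
Unset Printing Implicit Defensive.
Import Order.TTheory GRing.Theory Num.Theory.
Local Open Scope ring_scope.

Definition QF := {fraction {poly rat}}.

Definition qv : QF := FracField.tofrac ('X : {poly rat}).

Definition qpoch {R : comPzRingType} (a q : R) (n : nat) : R :=
  \prod_(i < n) (1 - a * q ^+ i).

Definition qbinom {F : fieldType} (q : F) (A B : int) : F :=
  if (0 <= B) && (B <= A) then
    qpoch q q `|A|%N / (qpoch q q `|B|%N * qpoch q q `|A - B|%N)
  else 0.

Definition legendre3 (j : int) : int :=
  if (j %% 3)%Z == 1 then 1 else if (j %% 3)%Z == 2 then -1 else 0.

(* binom(j-1, 2) = (j-1)(j-2)/2, an exact integer division. *)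
Definition binom2m1 (j : int) : int := (((j - 1) * (j - 2)) %/ 2)%Z.

(* Main.v *)
Require Import Defs.
From HB Require Import structures.
From mathcomp Require Import all_boot all_order all_algebra.
From mathcomp Require Import ring zify.
Import Order.TTheory GRing.Theory Num.Theory.
Local Open Scope ring_scope.
Set Warnings "-notation-overridden -ambiguous-paths".
Set Implicit Arguments.
Unset Strict Implicit.



Definition chi (F : fieldType) (n : nat) : F :=
  if (n %% 3 == 1)%N then 1 else if (n %% 3 == 2)%N then -1 else 0.

Lemma chi_mod (F : fieldType) n : chi F n = chi F (n %% 3).
Proof. by rewrite /chi modn_mod. Qed.

Lemma chi3 (F : fieldType) n : chi F (n + 3) = chi F n.
Proof. by rewrite chi_mod modnDr -chi_mod. Qed.

Lemma chi_sum (F : fieldType) n : chi F n + chi F n.+1 + chi F n.+2 = 0.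
Proof.
rewrite (chi_mod _ n) (chi_mod _ n.+1) (chi_mod _ n.+2).
have -> : (n.+1 %% 3 = ((n %% 3) + 1) %% 3)%N by rewrite modnDml addn1.
have -> : (n.+2 %% 3 = ((n %% 3) + 2) %% 3)%N by rewrite modnDml addn2.
have := ltn_pmod n (isT : (0 < 3)%N).
case: (n %% 3)%N => [|[|[|]]] // _; rewrite /chi /=.
- by rewrite add0r addrN.
- by rewrite addrN add0r.
- by rewrite addr0 addNr.
Qed.

Definition Phi (F : fieldType) (s : nat) (p : {poly F}) : F :=
  \sum_(i < size p) p`_i * chi F (i + s).

Lemma PhiE (F : fieldType) s (p : {poly F}) N : (size p <= N)%N ->
  Phi s p = \sum_(i < N) p`_i * chi F (i + s).
Proof.
move=> hN; rewrite /Phi (big_ord_widen N (fun i => p`_i * chi F (i + s)) hN).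
rewrite big_mkcond /=; apply: eq_bigr => i _; case: ifP => // /negbT.
by rewrite -leqNgt => h; rewrite nth_default // mul0r.
Qed.

Arguments PhiE {F} s {p N}.

Lemma PhiD (F : fieldType) s (p r : {poly F}) : Phi s (p + r) = Phi s p + Phi s r.
Proof.
set N := maxn (maxn (size p) (size r)) (size (p + r)).
have h1 : (size p <= N)%N by rewrite /N !leq_max leqnn.
have h2 : (size r <= N)%N by rewrite /N !leq_max leqnn orbT.
have h3 : (size (p + r)%R <= N)%N by rewrite /N !leq_max leqnn orbT.
rewrite (PhiE s h1) (PhiE s h2) (PhiE s h3) -big_split /=.
by apply: eq_bigr => i _; rewrite coefD mulrDl.
Qed.

Lemma PhiN (F : fieldType) s (p : {poly F}) : Phi s (- p) = - Phi s p.
Proof.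
rewrite /Phi size_polyN -sumrN; apply: eq_bigr => i _.
by rewrite coefN mulNr.
Qed.

Lemma PhiB (F : fieldType) s (p r : {poly F}) : Phi s (p - r) = Phi s p - Phi s r.
Proof. by rewrite PhiD PhiN. Qed.

Lemma PhiZ (F : fieldType) s (c : F) p : Phi s (c%:P * p) = c * Phi s p.
Proof.
set N := maxn (size p) (size (c%:P * p)).
have h1 : (size p <= N)%N by rewrite /N !leq_max leqnn.
have h3 : (size (c%:P * p)%R <= N)%N by rewrite /N !leq_max leqnn orbT.
rewrite (PhiE s h1) (PhiE _ h3) mulr_sumr.
by apply: eq_bigr => i _; rewrite coefCM mulrA.
Qed.

Lemma PhiX (F : fieldType) s (p : {poly F}) : Phi s ('X * p) = Phi s.+1 p.
Proof.
set N := maxn (size p) (size ('X * p)).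
have h1 : (size p <= N)%N by rewrite /N !leq_max leqnn.
have h3 : (size ('X * p)%R <= N.+1)%N.
  by apply: leq_trans (leqnSn _); rewrite /N !leq_max leqnn orbT.
rewrite (PhiE s.+1 h1) (PhiE s h3) big_ord_recl /= coefXM /= mul0r add0r.
by apply: eq_bigr => i _; rewrite coefXM /= /bump /= addnS.
Qed.

Lemma PhiXn (F : fieldType) s j (p : {poly F}) : Phi s ('X^j * p) = Phi (s + j) p.
Proof.
elim: j s => [|j IH] s; first by rewrite expr0 mul1r addn0.
by rewrite exprS -mulrA PhiX IH addSnnS.
Qed.

Lemma Phi1 (F : fieldType) s : Phi s (1 : {poly F}) = chi F s.
Proof. by rewrite /Phi size_poly1 big_ord1 coefC /= mul1r. Qed.

Definition mm (F : fieldType) : {poly F} := 1 + 'X + 'X^2.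

Lemma Phim (F : fieldType) s (h : {poly F}) : Phi s (h * mm F) = 0.
Proof.
have -> : h * mm F = h + 'X * h + 'X * ('X * h) by rewrite /mm; ring.
rewrite !PhiD !PhiX /Phi -!big_split /= big1 // => i _.
by rewrite -!mulrDr !addnS -!addSn chi_sum mulr0.
Qed.

Definition cg (F : fieldType) (p r : {poly F}) := exists h, p - r = h * mm F.

Lemma Phi_cg (F : fieldType) s (p r : {poly F}) : cg p r -> Phi s p = Phi s r.
Proof. by case=> h e; apply/eqP; rewrite -subr_eq0 -PhiB e Phim. Qed.

Lemma Phi_per (F : fieldType) s (p : {poly F}) : Phi (s + 3) p = Phi s p.
Proof. by apply: eq_bigr => i _; rewrite addnA chi3. Qed.

Lemma cg_refl (F : fieldType) (p r : {poly F}) : p = r -> cg p r.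
Proof. by move=> ->; exists 0; rewrite subrr mul0r. Qed.

Lemma cg_trans (F : fieldType) (p r t : {poly F}) : cg p r -> cg r t -> cg p t.
Proof.
case=> h1 e1 [h2 e2]; exists (h1 + h2).
by rewrite mulrDl -e1 -e2 addrA subrK.
Qed.

Lemma cg_mul (F : fieldType) (a b c d : {poly F}) : cg a b -> cg c d -> cg (a * c) (b * d).
Proof.
case=> h1 e1 [h2 e2]; exists (h1 * c + b * h2).
move/eqP: e1; rewrite subr_eq => /eqP ->.
move/eqP: e2; rewrite subr_eq => /eqP ->.
ring.
Qed.

Lemma pasc_gen (F : fieldType) (A B C x t : F) : B != 0 -> C != 0 -> 1 - x != 0 -> 1 - t != 0 ->
 A * (1 - x * t) / (B * (1 - x) * (C * (1 - t))) =
 A / (B * (1 - x) * C) + t * (A / (B * (C * (1 - t)))).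
Proof.
move=> hB hC hx ht.
field.
by rewrite hB hC hx ht.
Qed.

Definition qp (F : fieldType) (q : F) n := qpoch q q n.

Lemma qpS (F : fieldType) (q : F) n : qp q n.+1 = qp q n * (1 - q ^+ n.+1).
Proof. by rewrite /qp /qpoch big_ord_recr /= exprS. Qed.

Definition qgood (F : fieldType) (q : F) := forall k, 1 - q ^+ k.+1 != 0.

Lemma qp_neq0 (F : fieldType) (q : F) n : qgood q -> qp q n != 0.
Proof.
move=> hq; elim: n => [|n IH]; first by rewrite /qp /qpoch big_ord0 oner_eq0.
by rewrite qpS mulf_neq0.
Qed.

Definition qb (F : fieldType) (q : F) (n k : nat) : F := qbinom q n%:Z k%:Z.

Lemma qbE (F : fieldType) (q : F) n k :
  qb q n k = if (k <= n)%N then qp q n / (qp q k * qp q (n - k)) else 0.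
Proof.
rewrite /qb /qbinom lez_nat le0z_nat andTb.
by case: ifP => hk //; rewrite (distnEl hk) !absz_nat.
Qed.

Lemma qb0 (F : fieldType) (q : F) n : qgood q -> qb q n 0 = 1.
Proof. by move=> hq; rewrite qbE subn0 /qp /qpoch big_ord0 mul1r divff // qp_neq0. Qed.

Lemma qbnn (F : fieldType) (q : F) n : qgood q -> qb q n n = 1.
Proof. by move=> hq; rewrite qbE leqnn subnn /qp /qpoch big_ord0 mulr1 divff // qp_neq0. Qed.

Lemma qb_gt (F : fieldType) (q : F) n k : (n < k)%N -> qb q n k = 0.
Proof. by move=> h; rewrite qbE leqNgt h. Qed.

Lemma qb_pascal (F : fieldType) (q : F) n k : qgood q -> (k < n)%N ->
  qb q n.+1 k.+1 = qb q n k.+1 + q ^+ (n - k) * qb q n k.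
Proof.
move=> hq hk; rewrite !qbE hk (ltnW hk) ltnS (ltnW hk) subSS.
have e : (n - k = (n - k.+1).+1)%N by lia.
rewrite e !qpS.
have -> : q ^+ n.+1 = q ^+ k.+1 * q ^+ (n - k.+1).+1.
  by rewrite -exprD; congr (_ ^+ _); lia.
by apply: pasc_gen; rewrite ?qp_neq0.
Qed.



Lemma step_gen (R : comPzRingType) (a u B1 B0 t c y qn : R) : c * qn = a * t ->
  a * u * B1 * y + c * (u * y) * B0 * qn = a * (u * y) * (B1 + t * B0).
Proof.
move=> h; have -> : c * (u * y) * B0 * qn = (c * qn) * (u * y) * B0 by ring.
rewrite h; ring.
Qed.

Definition Pp (F : fieldType) (q y : F) n : {poly F} :=
  \prod_(i < n) (y%:P + (q ^+ i)%:P * 'X).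

Lemma coefPp (F : fieldType) (q y : F) n k : qgood q ->
  (Pp q y n)`_k = q ^+ 'C(k, 2) * y ^+ (n - k) * qb q n k.
Proof.
move=> hq; elim: n k => [|n IH] k.
  rewrite /Pp big_ord0 coef1; case: k => [|k].
    by rewrite qb0 // bin0n expr0 !mul1r.
  by rewrite qb_gt // mulr0.
have -> : Pp q y n.+1 = Pp q y n * (y%:P + (q ^+ n)%:P * 'X).
  by rewrite /Pp big_ord_recr.
rewrite mulrDr coefD coefMC mulrA coefMX coefMC.
case: k => [|k].
  by rewrite eqxx addr0 IH !qb0 // bin0n expr0 !mul1r !mulr1 subn0 exprSr.
rewrite /= !IH subSS.
case: (ltngtP k n) => hk.
- rewrite qb_pascal //.
  have ey : y ^+ (n - k.+1) * y = y ^+ (n - k).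
    by rewrite -exprSr; congr (_ ^+ _); lia.
  rewrite -ey; apply: step_gen.
  rewrite -!exprD binS bin1; congr (_ ^+ _); lia.
- by rewrite !qb_gt ?mulr0 ?mul0r ?addr0 //; lia.
- subst k; rewrite qb_gt // !qbnn // !subnn !mulr0 !mul0r add0r !expr0 !mulr1 binS bin1 exprD.
  by rewrite mulrC.
Qed.

Definition Qp (F : fieldType) (q : F) (L : nat) : F :=
  \prod_(i < L) (1 - q ^+ i + q ^+ i * q ^+ i).
Definition KL (L : nat) : nat := 3 * 'C(L.+1, 2).
Definition TT (F : fieldType) (q : F) (L : nat) : {poly F} :=
  (q ^+ KL L * Qp q L)%:P * 'X^(L.+1) *
  ((1 + 'X) * ((1 + (q ^+ L)%:P * 'X^2) * (1 + (q ^+ L.+1)%:P * 'X^2))).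

Lemma gen_base (R : comPzRingType) (c X : R) :
  c + X - X * ((1 + X) * ((1 + X ^+ 2) * (1 + c * X ^+ 2))) =
  (- c * (X - 1) - X ^+ 2 * (1 + c * X ^+ 2)) * (1 + X + X ^+ 2).
Proof. ring. Qed.

Lemma gen_f0 (R : comPzRingType) (c X : R) :
  c + X - X * (1 + c * X ^+ 2) = (c * (1 - X)) * (1 + X + X ^+ 2).
Proof. ring. Qed.

Lemma gen_f2 (R : comPzRingType) (x X : R) :
  (1 + x * X ^+ 2) * (1 + x * X) - (1 - x + x * x) =
  (x + x * x * (X - 1)) * (1 + X + X ^+ 2).
Proof. ring. Qed.

Lemma cg_base (F : fieldType) (q : F) : cg (Pp q q 1) (TT q 0).
Proof.
rewrite /Pp big_ord1 /TT /KL /Qp big_ord0 /=.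
have -> : (3 * 'C(1, 2) = 0)%N by [].
rewrite !expr0 mulr1 polyC1 !mul1r !expr1.
eexists; exact: gen_base.
Qed.

Lemma cg_f0 (F : fieldType) (c : F) : cg (c%:P + 'X) ('X * (1 + c%:P * 'X^2)).
Proof. eexists; exact: gen_f0. Qed.

Lemma cg_f2 (F : fieldType) (x : F) :
  cg ((1 + x%:P * 'X^2) * (1 + x%:P * 'X)) (1 - x%:P + x%:P * x%:P).
Proof. eexists; exact: gen_f2. Qed.



Lemma Pp_step (F : fieldType) (q : F) L :
  Pp q (q ^+ L.+2) (2 * L + 1).+2 =
  ((q ^+ L.+2)%:P + 'X) * ((q ^+ (2 * L + 1))%:P * Pp q (q ^+ L.+1) (2 * L + 1)) *
  ((q ^+ L.+2)%:P * (1 + (q ^+ L)%:P * 'X)).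
Proof.
rewrite /Pp big_ord_recl big_ord_recr /= expr0 polyC1 mul1r.
rewrite -mulrA; congr (_ * (_ * _)).
  rewrite (eq_bigr (fun i : 'I_(2 * L + 1) => q%:P * ((q ^+ L.+1)%:P + (q ^+ i)%:P * 'X))).
    by rewrite big_split /= prodr_const card_ord; congr (_ * _); rewrite rmorphXn.
  move=> i _; have -> : bump 0 i = i.+1 by rewrite /bump /=; lia.
  rewrite !exprS !polyCM; ring.
have -> : bump 0 (2 * L + 1) = (L.+2 + L)%N by rewrite /bump /=; lia.
rewrite exprD (polyCM (q ^+ L.+2) (q ^+ L)); ring.
Qed.

Lemma gen_rearr (R : comPzRingType) (X x y1 y2 a k Z : R) :
  X * (1 + y2 * X ^+ 2) * (a * (k * Z * ((1 + X) * ((1 + x * X ^+ 2) * (1 + y1 * X ^+ 2))))) *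
  (y2 * (1 + x * X)) =
  (a * y2 * k * (X * Z) * ((1 + X) * ((1 + y1 * X ^+ 2) * (1 + y2 * X ^+ 2)))) *
  ((1 + x * X ^+ 2) * (1 + x * X)).
Proof. ring. Qed.

Lemma gen_fin (R : comPzRingType) (X x y1 y2 a k Z : R) :
  (a * y2 * k * (X * Z) * ((1 + X) * ((1 + y1 * X ^+ 2) * (1 + y2 * X ^+ 2)))) *
  (1 - x + x * x) =
  (a * y2 * k * (1 - x + x * x)) * (X * Z) * ((1 + X) * ((1 + y1 * X ^+ 2) * (1 + y2 * X ^+ 2))).
Proof. ring. Qed.

Lemma constK (F : fieldType) (q : F) L :
  q ^+ KL L.+1 * Qp q L.+1 =
  q ^+ (2 * L + 1) * q ^+ L.+2 * (q ^+ KL L * Qp q L) * (1 - q ^+ L + q ^+ L * q ^+ L).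
Proof.
have -> : KL L.+1 = (2 * L + 1 + L.+2 + KL L)%N by rewrite /KL binS bin1; lia.
rewrite /Qp big_ord_recr /= !exprD; ring.
Qed.

Lemma cg_main (F : fieldType) (q : F) L : cg (Pp q (q ^+ L.+1) (2 * L + 1)) (TT q L).
Proof.
elim: L => [|L IH]; first exact: cg_base.
have -> : (2 * L.+1 + 1 = (2 * L + 1).+2)%N by lia.
rewrite Pp_step.
apply: cg_trans.
  apply: cg_mul; last exact: (cg_refl erefl).
  apply: cg_mul; first exact: cg_f0.
  apply: cg_mul; [exact: (cg_refl erefl) | exact: IH].
rewrite {1}/TT gen_rearr.
apply: cg_trans.
  apply: cg_mul; [exact: (cg_refl erefl) | exact: cg_f2].
apply: cg_refl; rewrite gen_fin /TT constK exprS.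
by rewrite !polyCM polyCD polyCB polyC1 polyCM.
Qed.



Lemma c2 k : ('C(k, 2) * 2 = k * (k - 1))%N.
Proof.
elim: k => [|k IH] //; rewrite binS bin1 mulnDl IH.
case: k {IH} => [|k] //; rewrite !subSS !subn0; nia.
Qed.

Lemma binom_ex (L k : nat) : (k <= 2 * L + 1)%N ->
  binom2m1 (k%:Z - L%:Z) = ('C(k, 2) + L.+1 * (2 * L + 1 - k))%N%:Z - (KL L)%:Z.
Proof.
move=> hk; rewrite /binom2m1.
have h1 := c2 k; have h2 := c2 L.+1.
set T := (_ - (KL L)%:Z).
have -> : ((k%:Z - L%:Z - 1) * (k%:Z - L%:Z - 2) = T * 2)%R by rewrite /T /KL; nia.
by rewrite mulzK.
Qed.

Lemma leg_ex (F : fieldType) (L k : nat) :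
  (legendre3 (k%:Z - L%:Z))%:~R = chi F (k + 2 * L).
Proof.
have -> : k%:Z - L%:Z = (- L%:Z) * 3 + (k + 2 * L)%N%:Z by lia.
rewrite /legendre3 modzMDl modz_nat chi_mod.
have := ltn_pmod (k + 2 * L) (isT : (0 < 3)%N).
by case: ((k + 2 * L) %% 3)%N => [|[|[|]]].
Qed.



Lemma PhiC (F : fieldType) s (c : F) : Phi s c%:P = c * chi F s.
Proof. by rewrite -[c%:P]mulr1 PhiZ Phi1. Qed.

Lemma PhiCX (F : fieldType) s (c : F) p : Phi s (c%:P + 'X * p) = c * chi F s + Phi s.+1 p.
Proof. by rewrite PhiD PhiC PhiX. Qed.

Lemma Phi_per3 (F : fieldType) s m (p : {poly F}) : Phi (s + 3 * m) p = Phi s p.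
Proof.
elim: m => [|m IH]; first by rewrite muln0 addn0.
have -> : (s + 3 * m.+1 = (s + 3 * m) + 3)%N by lia.
by rewrite Phi_per IH.
Qed.

Lemma gen_R (R : comPzRingType) (X x y : R) :
  (1 + X) * ((1 + x * X ^+ 2) * (1 + y * X ^+ 2)) =
  1 + X * (1 + X * ((x + y) + X * ((x + y) + X * (x * y + X * (x * y))))).
Proof. ring. Qed.

Lemma PhiTT (F : fieldType) (q : F) L :
  Phi (2 * L) (TT q L) = q ^+ KL L * Qp q L * (q ^+ L + q ^+ L.+1 - q ^+ L * q ^+ L.+1).
Proof.
rewrite /TT -mulrA PhiZ PhiXn.
have -> : (2 * L + L.+1 = 1 + 3 * L)%N by lia.
rewrite Phi_per3 gen_R -!polyCD -!polyCM -(polyC1 F) !PhiCX PhiC /chi /=.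
ring.
Qed.

Lemma PhiPp (F : fieldType) (q : F) L : qgood q ->
  Phi (2 * L) (Pp q (q ^+ L.+1) (2 * L + 1)) =
  \sum_(k < (2 * L + 1).+1) (Pp q (q ^+ L.+1) (2 * L + 1))`_k * chi F (k + 2 * L).
Proof.
move=> hq; apply: PhiE; apply/leq_sizeP => j hj.
by rewrite coefPp // qb_gt ?mulr0.
Qed.

Lemma qpoch_rhs (F : fieldType) (q : F) L :
  qpoch (-1) (q ^+ 3) L = qpoch (-1) q L * Qp q L.
Proof.
rewrite /qpoch /Qp -big_split /=; apply: eq_bigr => i _.
rewrite -exprM mulnC exprM; ring.
Qed.

Lemma qb_neg (F : fieldType) (q : F) (n : nat) (B : int) : B < 0 -> qbinom q n%:Z B = 0.
Proof. by move=> h; rewrite /qbinom leNgt h. Qed.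

Lemma qb_big (F : fieldType) (q : F) (n : nat) (B : int) : n%:Z < B -> qbinom q n%:Z B = 0.
Proof. by move=> h; rewrite /qbinom [B <= _]leNgt h andbF. Qed.



Definition Gt (F : fieldType) (q : F) L (i : nat) : F :=
  let j : int := (i%:Z - (2 * L + 2)%:Z)%R in
  q ^ (binom2m1 j) * (legendre3 j)%:~R * qbinom q (2 * L + 1)%:Z (L%:Z + j).

Lemma Gt_term (F : fieldType) (q : F) L k : qgood q -> q != 0 -> (k < (2 * L + 1).+1)%N ->
  Gt q L (k + (L + 2)) * q ^+ KL L =
  (Pp q (q ^+ L.+1) (2 * L + 1))`_k * chi F (k + 2 * L).
Proof.
move=> hq hq0 hk; rewrite /Gt.
have -> : (k + (L + 2))%N%:Z - (2 * L + 2)%N%:Z = k%:Z - L%:Z by lia.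
have -> : L%:Z + (k%:Z - L%:Z) = k%:Z by lia.
rewrite binom_ex; last by lia.
rewrite leg_ex coefPp //.
have e : q ^ (('C(k, 2) + L.+1 * (2 * L + 1 - k))%N%:Z - (KL L)%:Z) * q ^+ KL L =
          q ^+ ('C(k, 2) + L.+1 * (2 * L + 1 - k)).
  by rewrite exprnP -expfzDr // subrK.
rewrite -exprM -exprD -e /qb.
ring.
Qed.

Lemma Gt_lo (F : fieldType) (q : F) L i : (i < L + 2)%N -> Gt q L i = 0.
Proof. by move=> h; rewrite /Gt qb_neg ?mulr0 //; lia. Qed.

Lemma Gt_hi (F : fieldType) (q : F) L i : (3 * L + 4 <= i)%N -> Gt q L i = 0.
Proof. by move=> h; rewrite /Gt qb_big ?mulr0 //; lia. Qed.

Lemma gen_main (F : fieldType) (q : F) (L : nat) :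
  qgood q -> q != 0 -> (forall i, 1 + q ^+ i != 0) ->
  \sum_(i < 4 * L + 5)
     (let j : int := (i%:Z - (2 * L + 2)%:Z)%R in
      q ^ (binom2m1 j) * (legendre3 j)%:~R
         * qbinom q (2 * L + 1)%:Z (L%:Z + j))
  = q ^+ L * (qpoch (-1) (q ^+ 3) L / qpoch (-1) q L)
      * (1 + q - q ^+ L.+1).
Proof.
move=> hq hq0 hq1.
rewrite -(big_mkord xpredT (Gt q L)).
rewrite (big_cat_nat (n := (L + 2)%N)) //=; last by lia.
rewrite [X in _ + X](big_cat_nat (n := (3 * L + 4)%N)) //=; [|lia|lia].
rewrite big_nat_cond big1 ?add0r; last by move=> i /andP[/andP[_ h] _]; rewrite Gt_lo.
rewrite [X in _ + X]big_nat_cond [X in _ + X]big1 ?addr0; last by move=> i /andP[/andP[h _] _]; rewrite Gt_hi.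
rewrite -{1}[(L + 2)%N]add0n big_addn big_mkord.
have -> : (3 * L + 4 - (L + 2) = (2 * L + 1).+1)%N by lia.
apply: (mulIf (expf_neq0 (KL L) hq0)).
rewrite mulr_suml.
rewrite (eq_bigr (fun k : 'I_(2 * L + 1).+1 =>
   (Pp q (q ^+ L.+1) (2 * L + 1))`_k * chi F (k + 2 * L))); last first.
  by move=> k _; rewrite Gt_term.
rewrite -PhiPp // (Phi_cg _ (cg_main q L)) PhiTT qpoch_rhs [qpoch _ _ _ * _]mulrC mulfK; last first.
  rewrite /qpoch; apply/prodf_neq0 => i _.
  by rewrite mulN1r opprK.
rewrite exprS; ring.
Qed.

Notation tf := (@FracField.tofrac _).

Lemma qvX k : qv ^+ k = tf ('X^k : {poly rat}).
Proof. by rewrite /qv rmorphXn. Qed.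

Lemma qv_neq0 : qv != 0.
Proof. by rewrite /qv tofrac_eq0 polyX_eq0. Qed.

Lemma one_sub_neq0 k : 1 - qv ^+ k.+1 != 0.
Proof.
rewrite qvX -(rmorph1 tf) -rmorphB tofrac_eq0; apply/eqP => h.
have := congr1 (fun p : {poly rat} => p`_k.+1) h.
by rewrite coefB coef1 coefXn eqxx /= coef0 sub0r => /eqP; rewrite oppr_eq0 oner_eq0.
Qed.

Lemma one_add_neq0 k : 1 + qv ^+ k != 0.
Proof.
rewrite qvX -(rmorph1 tf) -rmorphD tofrac_eq0; apply/eqP => h.
have := congr1 (fun p : {poly rat} => p`_k) h.
rewrite coefD coef1 coefXn eqxx /= coef0; case: k {h} => [|k] /= /eqP.
  by rewrite -(natrD _ 1 1) pnatr_eq0.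
by rewrite add0r oner_eq0.
Qed.


Theorem theorem2p2 (L : nat) :
  \sum_(i < 4 * L + 5)
     (let j : int := (i%:Z - (2 * L + 2)%:Z)%R in
      qv ^ (binom2m1 j) * (legendre3 j)%:~R
         * qbinom qv (2 * L + 1)%:Z (L%:Z + j))
  = qv ^+ L * (qpoch (-1) (qv ^+ 3) L / qpoch (-1) qv L)
      * (1 + qv - qv ^+ L.+1).
Proof.
apply: gen_main.
- exact: one_sub_neq0.
- exact: qv_neq0.
- exact: one_add_neq0.
Qed.
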